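(* Let $\mathcal D=\{(x_i,a_i^w,a_i^l)\}_{i=1}^n$ be a finite set of preference pairs ($a_i^w$ preferred to $a_i^l$) and $\Gamma:\mathcal X\times\mathcal A\to\mathbb R$ any function. For a policy $\pi$ with $\pi(a|x)>0$ for all $(x,a)$ define $$\mathcal L(\pi)=\sum_{i=1}^n\log\sigma\Big(\eta\log\frac{\pi(a_i^w|x_i)}{\pi_0(a_i^w|x_i)}-\eta\log\frac{\pi(a_i^l|x_i)}{\pi_0(a_i^l|x_i)}+\Gamma(x_i,a_i^w)-\Gamma(x_i,a_i^l)\Big),$$ and for a function $r:\mathcal X\times\mathcal A\to\mathbb R$ define $\ell(r)=\sum_{i=1}^n\log\sigma(r(x_i,a_i^w)-r(x_i,a_i^l))$. Then: (a) a full-support policy $\pi$ maximizes $\mathcal L$ over all full-support policies if and only if $r_\pi(x,a):=\eta\log\frac{\pi(a|x)}{\pi_0(a|x)}+\Gamma(x,a)$ maximizes $\ell$ over all functions $r$; (b) if $r^\dagger$ maximizes $\ell$ over all functions $r$, then the policy $\hat\pi(a|x)\propto\pi_0(a|x)\exp\big((r^\dagger(x,a)-\Gamma(x,a))/\eta\big)$ (i.e. the maximizer of $\mathbb E_{x,a\sim\pi}[r^\dagger(x,a)-\Gamma(x,a)]-\eta\,\mathbb E_x\mathrm{KL}(\pi(\cdot|x)\|\pi_0(\cdot|x))$) maximizes $\mathcal L$.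
   Context: $\mathcal X$ prompts, $\mathcal A$ a finite set of responses; $\pi_0$ a reference policy with $\pi_0(a|x)>0$ for all $(x,a)$; $\eta>0$; $\sigma(z)=1/(1+e^{-z})$. *)

(* Defs.v *)
From HB Require Import structures.
From mathcomp Require Import all_boot all_order all_algebra.
From mathcomp Require Import all_classical all_reals all_analysis.
Set Implicit Arguments. Unset Strict Implicit. Unset Printing Implicit Defensive.
Import Order.TTheory GRing.Theory Num.Theory.
Local Open Scope ring_scope.

Section Defs.
Variables (R : realType) (X : Type) (A : finType).

Definition sigmoid (z : R) : R := 1 / (1 + expR (- z)).

Definition full_support_policy (pi : X -> A -> R) : Prop :=
  forall x, (forall a, 0 < pi x a) /\ \sum_(a : A) pi x a = 1.

Variables (n : nat) (xs : 'I_n -> X) (aw al : 'I_n -> A).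

Definition ell (r : X -> A -> R) : R :=
  \sum_(i < n) ln (sigmoid (r (xs i) (aw i) - r (xs i) (al i))).

Variables (pi0 : X -> A -> R) (eta : R) (Gamma : X -> A -> R).

Definition Lpol (pi : X -> A -> R) : R :=
  \sum_(i < n) ln (sigmoid
     (eta * ln (pi (xs i) (aw i) / pi0 (xs i) (aw i))
      - eta * ln (pi (xs i) (al i) / pi0 (xs i) (al i))
      + Gamma (xs i) (aw i) - Gamma (xs i) (al i))).

Definition r_of (pi : X -> A -> R) : X -> A -> R :=
  fun x a => eta * ln (pi x a / pi0 x a) + Gamma x a.

Definition maximizes_L (pi : X -> A -> R) : Prop :=
  full_support_policy pi /\
  forall pi', full_support_policy pi' -> Lpol pi' <= Lpol pi.

Definition maximizes_ell (r : X -> A -> R) : Prop :=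
  forall r', ell r' <= ell r.

Definition gibbs_policy (r : X -> A -> R) : X -> A -> R :=
  fun x a => pi0 x a * expR ((r x a - Gamma x a) / eta) /
             \sum_(b : A) pi0 x b * expR ((r x b - Gamma x b) / eta).
End Defs.

(* Main.v *)
Require Import Defs.
From mathcomp Require Import all_boot all_order all_algebra.
From mathcomp Require Import all_classical all_reals all_analysis.
From mathcomp Require Import ring.
Import Order.TTheory GRing.Theory Num.Theory.
Local Open Scope ring_scope.

Lemma Lpol_ell (R : realType) (X : Type) (A : finType) (n : nat)
  (xs : 'I_n -> X) (aw al : 'I_n -> A)
  (pi0 : X -> A -> R) (eta : R) (Gamma : X -> A -> R) pi :
  Lpol xs aw al pi0 eta Gamma pi = ell xs aw al (r_of pi0 eta Gamma pi).
Proof.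
rewrite /Lpol /ell; apply: eq_bigr => i _; rewrite /r_of; congr (ln (sigmoid _)).
by rewrite opprD !addrA; congr (_ + _); rewrite -!addrA; congr (_ + _); rewrite addrC.
Qed.

Lemma ell_shift (R : realType) (X : Type) (A : finType) (n : nat)
  (xs : 'I_n -> X) (aw al : 'I_n -> A) (r : X -> A -> R) (c : X -> R) :
  ell xs aw al (fun x a => r x a - c x) = ell xs aw al r.
Proof.
rewrite /ell; apply: eq_bigr => i _; congr (ln (sigmoid _)).
by rewrite opprB addrA subrK.
Qed.

Lemma Zpos (R : realType) (X : Type) (A : finType) (pi0 : X -> A -> R)
  (f : X -> A -> R) (hpi0 : full_support_policy pi0) x :
  0 < \sum_(b : A) pi0 x b * expR (f x b).
Proof.
have [hp hs] := hpi0 x.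
have : \sum_(b : A) pi0 x b <> 0 by rewrite hs; apply/eqP; exact: oner_neq0.
move/psumr_neq0P => [|a /andP[_ ha]]; first by move=> i _; exact: ltW.
rewrite (bigD1 a) //=; apply: (@lt_le_trans _ _ (pi0 x a * expR (f x a))).
  by rewrite mulr_gt0 // expR_gt0.
rewrite lerDl; apply: sumr_ge0 => i _; apply: mulr_ge0; [exact: ltW | exact: expR_ge0].
Qed.

Lemma gibbs_full (R : realType) (X : Type) (A : finType)
  (pi0 : X -> A -> R) (eta : R) (Gamma : X -> A -> R)
  (hpi0 : full_support_policy pi0) r :
  full_support_policy (gibbs_policy pi0 eta Gamma r).
Proof.
move=> x; have Z := @Zpos _ _ _ pi0 (fun x a => (r x a - Gamma x a) / eta) hpi0 x.
split.
  move=> a; rewrite /gibbs_policy divr_gt0 // mulr_gt0 ?expR_gt0 //.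
  by have [hp _] := hpi0 x; exact: hp.
by rewrite /gibbs_policy -mulr_suml mulrV // unitfE gt_eqF.
Qed.

Lemma gibbs_r (R : realType) (X : Type) (A : finType)
  (pi0 : X -> A -> R) (eta : R) (Gamma : X -> A -> R)
  (hpi0 : full_support_policy pi0) (heta : 0 < eta) r :
  r_of pi0 eta Gamma (gibbs_policy pi0 eta Gamma r) =
  (fun x a => r x a - eta * ln (\sum_(b : A) pi0 x b * expR ((r x b - Gamma x b) / eta))).
Proof.
apply: funext => x; apply: funext => a.
have Z := @Zpos _ _ _ pi0 (fun x a => (r x a - Gamma x a) / eta) hpi0 x.
have [hp _] := hpi0 x; have p := hp a.
set S := \sum_(b : A) _ in Z *.
rewrite /r_of /gibbs_policy -/S.
have -> : pi0 x a * expR ((r x a - Gamma x a) / eta) / S / pi0 x a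
  = expR ((r x a - Gamma x a) / eta) * S^-1.
  by rewrite mulrAC [pi0 x a * _]mulrC mulfK // (lt0r_neq0 p).
rewrite lnM ?posrE ?expR_gt0 ?invr_gt0 // expRK lnV ?posrE //.
rewrite mulrDr mulrCA mulfV ?(lt0r_neq0 heta) // mulr1 mulrN.
by rewrite addrAC subrK.
Qed.

Theorem proposition1 (R : realType) (X : Type) (A : finType) (n : nat)
  (xs : 'I_n -> X) (aw al : 'I_n -> A)
  (pi0 : X -> A -> R) (eta : R) (Gamma : X -> A -> R)
  (hpi0 : full_support_policy pi0) (heta : 0 < eta) :
  (forall pi : X -> A -> R, full_support_policy pi ->
     (maximizes_L xs aw al pi0 eta Gamma pi <->
      maximizes_ell xs aw al (r_of pi0 eta Gamma pi))) /\
  (forall rdag : X -> A -> R, maximizes_ell xs aw al rdag ->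
     maximizes_L xs aw al pi0 eta Gamma (gibbs_policy pi0 eta Gamma rdag)).
Proof.
have key : forall r, ell xs aw al (r_of pi0 eta Gamma (gibbs_policy pi0 eta Gamma r))
    = ell xs aw al r.
  by move=> r; rewrite gibbs_r // ell_shift.
have partA : forall pi : X -> A -> R, full_support_policy pi ->
     (maximizes_L xs aw al pi0 eta Gamma pi <->
      maximizes_ell xs aw al (r_of pi0 eta Gamma pi)).
  move=> pi hpi; split.
    move=> [_ hmax] r'; rewrite -key -!Lpol_ell; apply: hmax; exact: gibbs_full.
  move=> hmax; split => // pi' _; rewrite !Lpol_ell; exact: hmax.
split => // rdag hr.
apply/partA; first exact: gibbs_full.
by move=> r'; rewrite key; exact: hr.
Qed.
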